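(* For sufficiently small $r>0$ there is a constant $C$ depending only on $r$ such that for all $z\in\mathbb{B}_n$ and all $w\in D_\psi(z,r)$, $$\Big|2\,\mathrm{Re}\Big(\frac{1}{1-\langle w,z\rangle}\Big)-\frac{1}{1-|z|^2}-\frac{1}{1-|w|^2}\Big|\le C.$$
   Context: $\mathbb{B}_n$ is the open unit ball of $\mathbb{C}^n$, $\langle z,w\rangle=\sum_jz_j\overline{w_j}$. For $z\ne0$, $P_z\zeta=\frac{\langle\zeta,z\rangle}{\langle z,z\rangle}z$, $P_0=0$, $Q_z=I-P_z$, and $D_\psi(z,r)=\{w\in\mathbb{B}_n:|z-P_zw|<r(1-|z|^2)^{3/2},\ |Q_zw|<r(1-|z|^2)\}$. *)

(* Defs.v *)
From HB Require Import structures.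
From mathcomp Require Import all_boot all_order all_algebra.
From mathcomp Require Import complex.
From mathcomp Require Import reals.
Set Implicit Arguments. Unset Strict Implicit. Unset Printing Implicit Defensive.
Import Order.TTheory GRing.Theory Num.Theory.
Local Open Scope ring_scope.

Section Defs.
Variables (R : realType) (n : nat).
Local Notation C := R[i].
Definition cvec := 'rV[C]_n.

Definition cinner (z w : cvec) : C := \sum_(j < n) z 0 j * conjc (w 0 j).
Definition cnorm2 (z : cvec) : R := complex.Re (cinner z z).
Definition cnorm (z : cvec) : R := Num.sqrt (cnorm2 z).
Definition in_ball (z : cvec) : Prop := cnorm z < 1.
Definition Pz (z zeta : cvec) : cvec :=
  if z == 0 then 0 else (cinner zeta z / cinner z z) *: z.
Definition Qz (z zeta : cvec) : cvec := zeta - Pz z zeta.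
Definition D_psi (z : cvec) (r : R) (w : cvec) : Prop :=
  in_ball w /\
  cnorm (z - Pz z w) < r * ((1 - cnorm z ^+ 2) * Num.sqrt (1 - cnorm z ^+ 2)) /\
  cnorm (Qz z w) < r * (1 - cnorm z ^+ 2).
End Defs.

(* Main.v *)
Require Import Defs.
From HB Require Import structures.
From mathcomp Require Import all_boot all_order all_algebra.
From mathcomp Require Import complex reals.
From mathcomp Require Import ring lra.
Import Order.TTheory GRing.Theory Num.Theory.
Local Open Scope ring_scope.
Local Notation Re := complex.Re.
Local Notation Im := complex.Im.

Lemma keyK (R : realFieldType) (a d1 d2 e : R) :
  0 < a -> a <= 1 -> 0 <= e -> e <= a^+2 / 8 ->
  d1^+2 + d2^+2 <= a^+3 / 16 ->
  `| 2 * ((a + d1) / ((a + d1)^+2 + d2^+2)) - a^-1 - (a + 2 * d1 - e)^-1 | <= 2.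
Proof.
move=> a0 a1 e0 ea dD.
have d1a : d1^+2 <= a^+2/16.
  have : a^+3 <= a^+2 by rewrite exprS; nra.
  have : 0 <= d2^+2 by rewrite sqr_ge0.
  lra.
have hd1 : - (a/4) <= d1 <= a/4.
  apply/andP; split; nra.
have e2 : e <= a / 8 by nra.
set b := a + 2 * d1 - e.
set U := (a + d1)^+2 + d2^+2.
have b0 : 3 * a / 8 <= b by rewrite /b; lra.
have b1 : b <= 3 * a / 2 by rewrite /b; lra.
have U0 : 9 * a^+2 / 16 <= U.
  rewrite /U. have : 0 <= d2^+2 by rewrite sqr_ge0. 
  have : 3 * a / 4 <= a + d1 by lra.
  nra.
have bp : 0 < b by lra.
have a2 : 0 < a^+2 by rewrite exprn_gt0.
have Up : 0 < U by lra.
set X := a^+2 * e + (a + b) * (d1^+2 + d2^+2).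
have EX : 2 * ((a + d1) / U) - a^-1 - b^-1 = - (X / (U * a * b)).
  rewrite /X /U /b; field.
  by rewrite /U /b in Up bp; rewrite !gt_eqF //.
have Uab : 0 < U * a * b by rewrite !mulr_gt0.
have D0 : 0 <= d1^+2 + d2^+2 by rewrite addr_ge0 // sqr_ge0.
rewrite EX normrN ger0_norm; last first.
  apply: divr_ge0; last exact: ltW.
  rewrite /X; apply: addr_ge0; [apply: mulr_ge0 => //; exact: ltW | apply: mulr_ge0 => //; lra].
rewrite ler_pdivrMr //.
have h1 : a^+2 * e <= a^+2 * (a^+2/8) by rewrite ler_wpM2l // ltW.
have h2 : (a + b) * (d1^+2 + d2^+2) <= (5 * a / 2) * (d1^+2 + d2^+2) by rewrite ler_wpM2r //; lra.
have h3 : (5 * a / 2) * (d1^+2 + d2^+2) <= (5 * a / 2) * (a^+3/16) by rewrite ler_wpM2l //; lra.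
have h4 : U * a * b >= (9 * a^+2 / 16) * a * (3 * a / 8).
  apply: ler_pM; [| |apply: ler_pM|] => //; try lra; rewrite ?mulr_ge0 //; lra.
have E3 : a^+3 = a^+2 * a by rewrite exprS mulrC.
rewrite E3 in h3.
rewrite /X.
have : 0 < a^+2 * a^+2 by rewrite mulr_gt0.
move: h1 h2 h3 h4; rewrite /X; set A := a^+2. nra.
Qed.

Section S.
Context {R : realType} {n : nat}.
Local Notation C := R[i].
Implicit Types (x y : C) (u v t : cvec R n).


Lemma ReM x y : Re (x * y) = Re x * Re y - Im x * Im y. Proof. by case: x => ? ?; case: y => ? ?. Qed.
Lemma ImM x y : Im (x * y) = Re x * Im y + Im x * Re y. Proof. by case: x => ? ?; case: y => ? ?. Qed.
Lemma ReD x y : Re (x + y) = Re x + Re y. Proof. by case: x => ? ?; case: y => ? ?. Qed.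
Lemma ImD x y : Im (x + y) = Im x + Im y. Proof. by case: x => ? ?; case: y => ? ?. Qed.
Lemma ReN x : Re (- x) = - Re x. Proof. by case: x. Qed.
Lemma ImN x : Im (- x) = - Im x. Proof. by case: x. Qed.
Lemma ReB x y : Re (x - y) = Re x - Re y. Proof. by rewrite ReD ReN. Qed.
Lemma ImB x y : Im (x - y) = Im x - Im y. Proof. by rewrite ImD ImN. Qed.
Lemma ReJ x : Re (conjc x) = Re x. Proof. by case: x. Qed.
Lemma ImJ x : Im (conjc x) = - Im x. Proof. by case: x. Qed.
Lemma ReV x : Re (x^-1) = Re x / (Re x ^+ 2 + Im x ^+ 2). Proof. by case: x. Qed.
Lemma ImV x : Im (x^-1) = - (Im x / (Re x ^+ 2 + Im x ^+ 2)). Proof. by case: x. Qed.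
Lemma ReC (k : R) : Re (k%:C)%C = k. Proof. by []. Qed.
Lemma ImC (k : R) : Im (k%:C)%C = 0. Proof. by []. Qed.
Lemma Re1 : Re (1 : C) = 1. Proof. by []. Qed.
Lemma Im1 : Im (1 : C) = 0. Proof. by []. Qed.
Lemma Re0 : Re (0 : C) = 0. Proof. by []. Qed.
Lemma Im0 : Im (0 : C) = 0. Proof. by []. Qed.

Lemma Re_sum (F : 'I_n -> C) : Re (\sum_j F j) = \sum_j Re (F j).
Proof. exact: (big_morph _ ReD Re0). Qed.
Lemma Im_sum (F : 'I_n -> C) : Im (\sum_j F j) = \sum_j Im (F j).
Proof. exact: (big_morph _ ImD Im0). Qed.

Lemma cinnerBl u v t : cinner (u - v) t = cinner u t - cinner v t.
Proof. rewrite /cinner -sumrB; apply: eq_bigr => j _; rewrite !mxE; ring. Qed.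
Lemma cinnerBr u v t : cinner t (u - v) = cinner t u - cinner t v.
Proof. rewrite /cinner -sumrB; apply: eq_bigr => j _; rewrite !mxE rmorphB /=; ring. Qed.
Lemma cinnerZl c u v : cinner (c *: u) v = c * cinner u v.
Proof. rewrite /cinner mulr_sumr; apply: eq_bigr => j _; rewrite !mxE; ring. Qed.
Lemma cinnerZr c u v : cinner u (c *: v) = conjc c * cinner u v.
Proof. rewrite /cinner mulr_sumr; apply: eq_bigr => j _; rewrite !mxE rmorphM /=; ring. Qed.
Lemma cinnerC u v : cinner v u = conjc (cinner u v).
Proof. rewrite /cinner rmorph_sum; apply: eq_bigr => j _; rewrite rmorphM /= conjcK; ring. Qed.
Lemma cinner0r u : cinner u 0 = 0.
Proof. rewrite /cinner big1 // => j _; by rewrite mxE rmorph0 mulr0. Qed.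

Lemma Im_self u : Im (cinner u u) = 0.
Proof. rewrite /cinner Im_sum big1 // => j _; rewrite ImM ReJ ImJ; ring. Qed.
Lemma cinner_self u : cinner u u = ((cnorm2 u)%:C)%C.
Proof. by rewrite /cnorm2; apply/eqP; rewrite eq_complex /= Im_self !eqxx. Qed.

Lemma cnorm2_ge0 u : 0 <= cnorm2 u.
Proof.
rewrite /cnorm2 /cinner Re_sum; apply: sumr_ge0 => j _.
by rewrite ReM ReJ ImJ mulrN opprK addr_ge0 // -expr2 sqr_ge0.
Qed.

Lemma cnorm2_eq0 u : cnorm2 u = 0 -> u = 0.
Proof.
rewrite /cnorm2 /cinner Re_sum => /psumr_eq0P H.
have {}H : forall j, Re (u 0 j * conjc (u 0 j)) = 0.
  move=> j; apply: H => // k _.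
  by rewrite ReM ReJ ImJ mulrN opprK addr_ge0 // -expr2 sqr_ge0.
apply/matrixP => i j; rewrite (ord1 i) mxE.
have := H j; rewrite ReM ReJ ImJ.
case: (u 0 j) => a b /= hab.
have ha : a * a + b * b = 0 by rewrite -hab; ring.
have a0 : a = 0 by nra.
have b0 : b = 0 by nra.
by rewrite a0 b0.
Qed.

Lemma cnorm_sq u : cnorm u ^+ 2 = cnorm2 u.
Proof. by rewrite /cnorm sqr_sqrtr // cnorm2_ge0. Qed.

Lemma cnorm2_0 : cnorm2 (0 : cvec R n) = 0.
Proof. by rewrite /cnorm2 cinner0r. Qed.

Lemma sqrt_lt (x y : R) : 0 <= x -> Num.sqrt x < y -> x < y ^+ 2.
Proof.
move=> x0 h; rewrite -(sqr_sqrtr x0).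
have := sqrtr_ge0 x; set t := Num.sqrt x in h *; nra.
Qed.
End S.

Theorem lemma2p12 (R : realType) (n : nat) :
  exists r0 : R, 0 < r0 /\
  forall r : R, 0 < r -> r < r0 ->
  exists C : R, forall z w : cvec R n,
    in_ball z -> D_psi z r w ->
    `| 2 * complex.Re ((1 - cinner w z)^-1)
       - (1 - cnorm z ^+ 2)^-1 - (1 - cnorm w ^+ 2)^-1 | <= C.
Proof.
exists (1/4); split; first lra.
move=> r r0 r1; exists 2 => z w zb [wb [H1 H2]].
have rr : r ^+ 2 <= 1/16 by nra.
move: H1 H2; rewrite /in_ball /cnorm in zb wb.
rewrite /cnorm !cnorm_sq /Qz /Pz.
have N0 := cnorm2_ge0 w; have s0 := cnorm2_ge0 z.
have N1 : cnorm2 w < 1 by have := sqrt_lt _ _ N0 wb; rewrite expr1n.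
have s1 : cnorm2 z < 1 by have := sqrt_lt _ _ s0 zb; rewrite expr1n.
have [->|z0] := eqVneq z 0.
  rewrite cinner0r !cnorm2_0 !subr0 invr1 Re1 mulr1 mulr1 sqrtr1 => _ H2.
  have HN := sqrt_lt _ _ N0 H2.
  set N := cnorm2 w in N0 N1 HN *.
  have E : 2 - 1^-1 - (1 - N)^-1 = 2 * ((1 + 0) / ((1 + 0)^+2 + 0^+2)) - 1^-1 - (1 + 2 * 0 - N)^-1.
    by rewrite !(expr2, mulr0, addr0, mulr1, invr1, divr1).
  rewrite E; apply: keyK; rewrite ?expr2 ?mulr0 ?mulr1 ?addr0; lra.
have sne : cnorm2 z != 0 by apply: contra_neq z0; exact: cnorm2_eq0.
have sp : 0 < cnorm2 z by rewrite lt0r sne.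
set s := cnorm2 z in s0 s1 sne sp *.
set N := cnorm2 w in N0 N1 *.
set p := cinner w z.
have E1 : cnorm2 (z - (p / cinner z z) *: z) = ((s - Re p)^+2 + Im p^+2) / s.
  rewrite /cnorm2 !cinnerBl !cinnerBr !cinnerZl !cinnerZr cinner_self -/s.
  rewrite !(ReM, ImM, ReB, ImB, ReD, ImD, ReJ, ImJ, ReV, ImV, ReC, ImC).
  by field.
have E2 : cnorm2 (w - (p / cinner z z) *: z) = N - (Re p^+2 + Im p^+2) / s.
  rewrite [X in X = _]/cnorm2 !cinnerBl !cinnerBr !cinnerZl !cinnerZr [cinner z w]cinnerC -/p.
  rewrite [cinner z z]cinner_self [cinner w w]cinner_self -/s -/N.
  rewrite !(ReM, ImM, ReB, ImB, ReD, ImD, ReJ, ImJ, ReV, ImV, ReC, ImC).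
  by field.
have c2 := cnorm2_ge0 (w - (p / cinner z z) *: z).
rewrite E1 in c2 *; rewrite E2 in c2 *.
have c1 : 0 <= ((s - Re p)^+2 + Im p^+2) / s.
  by apply: divr_ge0; [rewrite addr_ge0 // sqr_ge0 | exact: ltW].
move=> /(sqrt_lt _ _ c1) H1 /(sqrt_lt _ _ c2) H2.
rewrite ReV ReB ImB Re1 Im1 sub0r sqrrN.
set p1 := Re p in c1 c2 H1 H2 *; set p2 := Im p in c1 c2 H1 H2 *.
set a := 1 - s in H1 H2 *.
have a0 : 0 < a by rewrite /a; lra.
have a1 : a <= 1 by rewrite /a; lra.
have sa : Num.sqrt a ^+ 2 = a by rewrite sqr_sqrtr // ltW.
rewrite !exprMn sa in H1; rewrite exprMn in H2.
set c1v := ((s - p1)^+2 + p2^+2) / s in c1 H1.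
set c2v := N - (p1^+2 + p2^+2) / s in c2 H2.
have A2 : 0 < a^+2 by rewrite exprn_gt0.
have h1 : r^+2 * (a^+2 * a) <= (1/16) * (a^+2 * a) by rewrite ler_wpM2r // mulr_ge0 // ltW.
have h2 : r^+2 * (a^+2 * a) <= r^+2 * a^+2.
  by rewrite ler_wpM2l ?sqr_ge0 // ger_pMr.
have h3 : r^+2 * a^+2 <= (1/16) * a^+2 by rewrite ler_wpM2r // ltW.
have Dle : (s - p1)^+2 + p2^+2 <= c1v.
  rewrite /c1v ler_pdivlMr // ler_piMr ?addr_ge0 ?sqr_ge0 //; exact: ltW.
have K := @keyK _ a (s - p1) p2 (c1v + c2v) a0 a1.
have Ea : a + (s - p1) = 1 - p1 by rewrite /a; ring.
have Eb : a + 2 * (s - p1) - (c1v + c2v) = 1 - N.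
  rewrite /c1v /c2v /a; field; exact: sne.
rewrite Ea Eb in K; apply: K.
- exact: addr_ge0.
- have -> : a^+2 / 8 = (1/16) * a^+2 + (1/16) * a^+2 by field.
  lra.
- have -> : a^+3 = a^+2 * a by rewrite exprS mulrC.
  lra.
Qed.
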